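(* Let $0<p_0<1$, $\epsilon>0$, $\omega\ge0$, $\gamma_0\ge\gamma\ge0$, and suppose $p_0\le\frac12-\frac{\gamma_0+\gamma}{2\sqrt{4\epsilon^2+(\gamma_0+\gamma)^2}}$. Let $\omega(t),\epsilon_x(t),\epsilon_y(t),\delta\gamma_t$ be real-valued functions of time with $|\omega(t)|\le\omega$, $\sqrt{\epsilon_x^2(t)+\epsilon_y^2(t)}\le\epsilon$, $|\delta\gamma_t|\le\gamma$, and set $H(t)=[1+\omega(t)]I_z+\epsilon_x(t)I_x+\epsilon_y(t)I_y$, $\gamma_t=\gamma_0+\delta\gamma_t$. Let the qubit density matrix $\rho_t$ evolve according to $$\dot\rho_t=-i[H(t),\rho_t]+\gamma_t\Big(\sigma_-\rho_t\sigma_+-\tfrac12\sigma_+\sigma_-\rho_t-\tfrac12\rho_t\sigma_+\sigma_-\Big)$$ with $\rho_0=|0\rangle\langle0|$. Let $$T_a'=\frac{2p_0}{4\epsilon\sqrt{p_0-p_0^2}+2(\gamma_0+\gamma)(1-p_0)}.$$ Then for every $t\in[0,T_a']$, $\langle0|\rho_t|0\rangle\ge1-p_0$; equivalently, a projective measurement of $\sigma_z$ at time $t$ has probability of failure $\langle1|\rho_t|1\rangle\le p_0$.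
   Context: $\sigma_x,\sigma_y,\sigma_z$ are the Pauli matrices $\begin{pmatrix}0&1\\1&0\end{pmatrix},\begin{pmatrix}0&-i\\i&0\end{pmatrix},\begin{pmatrix}1&0\\0&-1\end{pmatrix}$, $I_j=\frac12\sigma_j$, $\sigma_-=\frac12(\sigma_x-i\sigma_y)$, $\sigma_+=\frac12(\sigma_x+i\sigma_y)$, $[A,B]=AB-BA$. $|0\rangle=(1,0)^T$, $|1\rangle=(0,1)^T$. Units with $\hbar=1$. *)

(* Defs.v *)
From HB Require Import structures.
From mathcomp Require Import all_boot all_order all_algebra.
From mathcomp Require Import all_classical all_reals all_analysis.
From mathcomp Require Export complex.
Set Implicit Arguments. Unset Strict Implicit. Unset Printing Implicit Defensive.
Import Order.TTheory GRing.Theory Num.Theory.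
Import numFieldNormedType.Exports.
Local Open Scope ring_scope.
Local Open Scope complex_scope.

Section Qubit.
Variable R : realType.
Local Notation C := R[i].

Definition mk2 (a b c d : C) : 'M[C]_2 :=
  \matrix_(k < 2, l < 2)
    if (k == 0 :> nat) then (if (l == 0 :> nat) then a else b)
    else (if (l == 0 :> nat) then c else d).

Definition sigma_x : 'M[C]_2 := mk2 0 1 1 0.
Definition sigma_y : 'M[C]_2 := mk2 0 (- 'i) 'i 0.
Definition sigma_z : 'M[C]_2 := mk2 1 0 0 (-1).

Definition I_x : 'M[C]_2 := (2^-1) *: sigma_x.
Definition I_y : 'M[C]_2 := (2^-1) *: sigma_y.
Definition I_z : 'M[C]_2 := (2^-1) *: sigma_z.

Definition sigma_minus : 'M[C]_2 := (2^-1) *: (sigma_x - 'i *: sigma_y).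
Definition sigma_plus  : 'M[C]_2 := (2^-1) *: (sigma_x + 'i *: sigma_y).

Definition commutator (A B : 'M[C]_2) : 'M[C]_2 := A *m B - B *m A.

Definition ket0 : 'cV[C]_2 := \col_(k < 2) (if (k == 0 :> nat) then 1 else 0).
Definition bra0 : 'rV[C]_2 := (map_mx conjc ket0)^T.

Definition Ham (w ex ey : R -> R) (t : R) : 'M[C]_2 :=
  (1 + w t)%:C *: I_z + (ex t)%:C *: I_x + (ey t)%:C *: I_y.

Definition lindblad_rhs (w ex ey dg : R -> R) (g0 : R) (t : R)
    (rho : 'M[C]_2) : 'M[C]_2 :=
  - 'i *: commutator (Ham w ex ey t) rho
  + (g0 + dg t)%:C *:
      (sigma_minus *m rho *m sigma_plus
       - (2^-1) *: (sigma_plus *m sigma_minus *m rho)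
       - (2^-1) *: (rho *m sigma_plus *m sigma_minus)).

End Qubit.

(* Main.v *)
Require Import Defs.
From HB Require Import structures.
From mathcomp Require Import all_boot all_order all_algebra.
From mathcomp Require Import all_classical all_reals all_analysis.
From mathcomp Require Import complex.
From mathcomp Require Import ring lra.
Import Order.TTheory GRing.Theory Num.Theory.
Import numFieldNormedType.Exports.
Local Open Scope ring_scope.
Local Open Scope complex_scope.
Local Open Scope classical_set_scope.
Set Implicit Arguments. Unset Strict Implicit.

Section S.
Variable R : realType.
Local Notation C := R[i].
Local Notation RE := (@complex.Re R).
Local Notation IM := (@complex.Im R).
Lemma inv2C : (2^-1 : R[i]) = (2^-1)%:C.
Proof. rewrite fmorphV. by rewrite rmorph_nat. Qed.

Lemma mk2E (M : 'M[C]_2) : M = mk2 (M 0 0) (M 0 1) (M 1 0) (M 1 1).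
Proof. by apply/matrixP => i j; rewrite !mxE; case: i => [[|[|]]] //= ?; case: j => [[|[|]]] //= ?; congr (M _ _); apply/val_inj. Qed.

Lemma mulmk2 (a b c d a' b' c' d' : C) : mk2 a b c d *m mk2 a' b' c' d' = mk2 (a*a' + b*c') (a*b'+b*d') (c*a'+d*c') (c*b'+d*d').
Proof. apply/matrixP => i j; rewrite !mxE !big_ord_recl big_ord0 !mxE /=.
case: i => [[|[|]]] //= ?; case: j => [[|[|]]] //= ?; rewrite addr0 //. Qed.

Lemma addmk2 (a b c d a' b' c' d' : C) : mk2 a b c d + mk2 a' b' c' d' = mk2 (a+a') (b+b') (c+c') (d+d').
Proof. apply/matrixP => i j; rewrite !mxE. by case: i => [[|[|]]] //= ?; case: j => [[|[|]]] //= ?. Qed.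

Lemma oppmk2 (a b c d : C) : - mk2 a b c d = mk2 (-a) (-b) (-c) (-d).
Proof. apply/matrixP => i j; rewrite !mxE. by case: i => [[|[|]]] //= ?; case: j => [[|[|]]] //= ?. Qed.

Lemma scalemk2 (k a b c d : C) : k *: mk2 a b c d = mk2 (k*a) (k*b) (k*c) (k*d).
Proof. apply/matrixP => i j; rewrite !mxE. by case: i => [[|[|]]] //= ?; case: j => [[|[|]]] //= ?. Qed.

Lemma rhs_entries (w ex ey dg : R -> R) g0 t (a A u v p q d D : R) :
  let W := 1 + w t in let X := ex t in let Y := ey t in let G := g0 + dg t in
  let L := lindblad_rhs w ex ey dg g0 t (mk2 (a +i* A) (u +i* v) (p +i* q) (d +i* D)) in
  RE (L 0 0) = (X * q - Y * p - X * v - Y * u) / 2 - G * a /\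
  IM (L 0 0) = - (X * p + Y * q - X * u + Y * v) / 2 - G * A /\
  RE (L 0 1) = W * v + (X * (D - A) - Y * (d - a)) / 2 - G * u / 2 /\
  IM (L 0 1) = - W * u - (X * (d - a) + Y * (D - A)) / 2 - G * v / 2 /\
  RE (L 1 0) = (X * (A - D) + Y * (a - d)) / 2 - W * q - G * p / 2 /\
  IM (L 1 0) = - (X * (a - d) - Y * (A - D)) / 2 + W * p - G * q / 2 /\
  RE (L 1 1) = - (X * q - Y * p - X * v - Y * u) / 2 + G * a /\
  IM (L 1 1) = (X * p + Y * q - X * u + Y * v) / 2 + G * A.
Proof.
rewrite /lindblad_rhs /commutator /Ham /I_x /I_y /I_z /sigma_minus /sigma_plus /sigma_x /sigma_y /sigma_z.
rewrite !(scalemk2, addmk2, oppmk2, mulmk2, scalemk2, addmk2, oppmk2).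
rewrite !mxE /= ?inv2C /=.
by repeat split; field.
Qed.
End S.

Section G.
Variable R : realType.

Definition good (f f' : R -> R) :=
  (forall s : R, 0 < s -> is_derive s 1 f (f' s)) /\ (f x @[x --> (0:R)^'+] --> f 0).

Lemma good_cont (f f' : R -> R) (s : R) : good f f' -> 0 < s -> f x @[x --> s] --> f s.
Proof.
move=> [H _] s0; have [d _] := H s s0.
by apply: differentiable_continuous; rewrite -derivable1_diffP.
Qed.

Lemma good_right (f f' : R -> R) (s : R) : good f f' -> 0 <= s -> f x @[x --> s^'+] --> f s.
Proof.
move=> Hg; rewrite le_eqVlt => /orP[/eqP <-|s0]; first by case: Hg.
by apply: cvg_at_right_filter; apply: good_cont Hg s0.
Qed.

Lemma good_MVT (f f' : R -> R) (a b : R) : good f f' -> 0 <= a -> a < b ->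
  exists2 c, a < c < b & f b - f a = f' c * (b - a).
Proof.
move=> Hg a0 ab.
have Hd : forall x, x \in `]a, b[%R -> is_derive x 1 f (f' x).
  by move=> x; rewrite in_itv /= => /andP[ax _]; apply: Hg.1; apply: le_lt_trans ax.
have Hc : {within `[a, b], continuous f}.
  apply/continuous_within_itvP => //; split.
  - move=> x; rewrite in_itv /= => /andP[ax _]; apply: good_cont Hg _.
    exact: le_lt_trans ax.
  - exact: good_right Hg a0.
  - apply: cvg_at_left_filter; apply: good_cont Hg _; exact: le_lt_trans ab.
have [c cin ->] := MVT ab Hd Hc.
by exists c => //; move: cin; rewrite in_itv.
Qed.

Lemma good_cst (c : R) : good (fun _ => c) (fun _ => 0).
Proof. split; first by move=> s _; exact: is_derive_cst. exact: cvg_cst. Qed.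

Lemma good_id : good (fun s => s) (fun _ => 1).
Proof. split; first by move=> s _; exact: is_derive_id. exact: cvg_at_right_filter (cvg_id). Qed.

Lemma good_add (f f' g g' : R -> R) : good f f' -> good g g' ->
  good (fun s => f s + g s) (fun s => f' s + g' s).
Proof.
move=> [Hf Cf] [Hg Cg]; split.
  by move=> s s0; have := is_deriveD (Hf s s0) (Hg s s0).
exact: (cvgD Cf Cg).
Qed.

Lemma good_opp (f f' : R -> R) : good f f' -> good (fun s => - f s) (fun s => - f' s).
Proof.
move=> [Hf Cf]; split.
  by move=> s s0; have := is_deriveN (Hf s s0).
exact: (cvgN Cf).
Qed.

Lemma good_mul (f f' g g' : R -> R) : good f f' -> good g g' ->
  good (fun s => f s * g s) (fun s => f s * g' s + g s * f' s).
Proof.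
move=> [Hf Cf] [Hg Cg]; split.
  by move=> s s0; have := is_deriveM (Hf s s0) (Hg s s0).
exact: (cvgM Cf Cg).
Qed.

Lemma good_ext (f f' f'' : R -> R) : good f f' -> (forall s, 0 < s -> f' s = f'' s) -> good f f''.
Proof.
move=> [Hf Cf] E; split => // s s0; rewrite -E //; exact: Hf.
Qed.

Lemma good_nincr (f f' : R -> R) (a b : R) : good f f' -> 0 <= a -> a <= b ->
  (forall c, a < c < b -> f' c <= 0) -> f b <= f a.
Proof.
move=> Hg a0; rewrite le_eqVlt => /orP[/eqP -> //|ab] H.
have [c /H c0 E] := good_MVT Hg a0 ab.
rewrite -subr_le0 E; apply: mulr_le0_ge0 => //; lra.
Qed.

End G.

Section G.
Variable R : realType.
Lemma cont_near (h : R -> R) (s e : R) : h x @[x --> s] --> h s -> 0 < e ->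
  exists2 d, 0 < d & forall y, `|s - y| < d -> `|h s - h y| < e.
Proof.
move=> /cvgrPdist_lt /[swap] e0 /(_ e e0).
move=> /nbhs_normP [d d0 Hd]; exists d => // y sy; exact: (Hd y sy).
Qed.
Lemma cont_near_right (h : R -> R) (s e : R) : h x @[x --> s^'+] --> h s -> 0 < e ->
  exists2 d, 0 < d & forall y, s < y -> y < s + d -> `|h s - h y| < e.
Proof.
move=> /cvgrPdist_lt /[swap] e0 /(_ e e0).
rewrite /= near_withinE.
move=> /nbhs_normP [d d0 Hd]; exists d => // y sy yd; apply: (Hd y) => //.
rewrite /ball_ /= ltr0_norm ?subr_lt0 //; lra.
Qed.

Lemma cont_ind (h : R -> R) (t1 : R) :
  0 <= t1 -> h 0 <= 0 ->
  (forall s : R, 0 < s -> h x @[x --> s] --> h s) ->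
  (forall s : R, 0 <= s -> s < t1 -> h s <= 0 ->
     exists2 d, 0 < d & forall r, s < r -> r < s + d -> h r <= 0) ->
  h t1 <= 0.
Proof.
move=> t10 h0 hc hstep.
pose S := [set s | 0 <= s <= t1 /\ forall r, 0 <= r <= s -> h r <= 0].
have S0 : S 0.
  split; first by rewrite lexx t10.
  by move=> r /andP[r0 r0']; have -> : r = 0 by apply/eqP; rewrite eq_le r0 r0'.
have hs : has_sup S.
  split; first by exists 0.
  by exists t1 => x [/andP[_ ->]].
set s0 := sup S.
have s0ub := sup_upper_bound hs.
have s00 : 0 <= s0 by apply: s0ub.
have s0t1 : s0 <= t1 by apply: ge_sup; [exists 0 | move=> x [/andP[_ ->]]].
have A : forall r, 0 <= r -> r < s0 -> h r <= 0.
  move=> r r0 rs.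
  have sr : 0 < s0 - r by rewrite subr_gt0.
  have [e [_ He] He'] := sup_adherent sr hs.
  apply: He; rewrite r0 /=; rewrite -/s0 in He'; lra.
have B : h s0 <= 0.
  have [s0z|s0p] := eqVneq s0 0; first by rewrite s0z.
  have s0p' : 0 < s0 by rewrite lt_neqAle eq_sym s0p s00.
  rewrite leNgt; apply/negP => hpos.
  have [d d0 Hd] := cont_near (hc s0 s0p') hpos.
  set m := Num.min d s0.
  have m1 : m <= d by rewrite ge_min lexx.
  have m2 : m <= s0 by rewrite ge_min lexx orbT.
  have m0 : 0 < m by rewrite lt_min d0 s0p'.
  have := A (s0 - m / 2) ltac:(lra) ltac:(lra).
  have := Hd (s0 - m / 2).
  rewrite (_ : s0 - (s0 - m / 2) = m / 2); last by ring.
  rewrite ger0_norm; last by lra.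
  move=> /(_ ltac:(lra)); rewrite ltr_norml; lra.
have [s0lt|] := ltP s0 t1; last first.
  move=> t1s0; have -> : t1 = s0 by apply/eqP; rewrite eq_le t1s0 s0t1.
  exact: B.
have [d d0 Hd] := hstep s0 s00 s0lt B.
set m := Num.min d (t1 - s0).
have m1 : m <= d by rewrite ge_min lexx.
have m2 : m <= t1 - s0 by rewrite ge_min lexx orbT.
have m0 : 0 < m by rewrite lt_min d0 subr_gt0 s0lt.
have : S (s0 + m / 2).
  split; first by apply/andP; split; lra.
  move=> r /andP[r0 rr].
  have [rs|] := ltP r s0; first exact: A.
  rewrite le_eqVlt => /orP[/eqP <-|sr]; first exact: B.
  apply: Hd => //; lra.
move=> /s0ub; rewrite -/s0; lra.
Qed.
End G.

Section K.
Variable R : realType.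
Lemma key_ineq (p0 eps K X Y u v a gam : R) :
  0 < p0 -> p0 < 1 -> 0 < eps -> 0 <= K ->
  p0 <= 2^-1 - K / (2 * Num.sqrt (4 * eps ^+ 2 + K ^+ 2)) ->
  X^+2 + Y^+2 <= eps^+2 -> u^+2 + v^+2 <= a * (1 - a) -> 0 <= a -> 1 - a <= p0 ->
  0 <= gam -> gam <= K ->
  X * v + Y * u + gam * a <= 2 * eps * Num.sqrt (p0 - p0^+2) + K * (1 - p0).
Proof.
move=> p00 p01 e0 K0 Hp HXY Huv a0 qp g0 gK.
have a1 : a <= 1.
  rewrite leNgt; apply/negP => hq.
  have : a * (1 - a) < 0 by rewrite pmulr_rlt0; lra.
  have := sqr_ge0 u; have := sqr_ge0 v; lra.
set q := 1 - a.
have qE : q = 1 - a by [].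
clearbody q.
have q0 : 0 <= q by lra.
have -> : a = 1 - q by lra.

set r := Num.sqrt (4 * eps ^+ 2 + K ^+ 2).
have r0 : 0 < r by rewrite sqrtr_gt0; nra.
have r2 : r ^+ 2 = 4 * eps ^+ 2 + K ^+ 2 by rewrite sqr_sqrtr //; nra.
set sp := Num.sqrt (p0 - p0 ^+ 2).
have pp : 0 < p0 * (1 - p0) by apply: mulr_gt0; lra.
have sp0 : 0 < sp by rewrite sqrtr_gt0 expr2; nra.
have sp2 : sp ^+ 2 = p0 - p0 ^+ 2 by rewrite sqr_sqrtr // expr2; nra.
set s := Num.sqrt (q - q ^+ 2).
have s0 : 0 <= s by apply: sqrtr_ge0.
have qq : 0 <= q * (1 - q) by apply: mulr_ge0; lra.
have s2 : s ^+ 2 = q - q ^+ 2 by rewrite sqr_sqrtr // expr2; nra.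
have x0 : K / r <= 1 - 2 * p0.
  have : K / (2 * r) = (K / r) / 2 by rewrite invfM; field; lra.
  move=> E; rewrite E in Hp; lra.
have Kr0 : 0 <= K / r by apply: divr_ge0 => //; lra.
have x1 : K <= r * (1 - 2 * p0).
  have := ler_wpM2r (ltW r0) x0; rewrite divfK ?gt_eqF //; lra.
have x2 : K ^+ 2 <= r ^+ 2 * (1 - 2 * p0) ^+ 2.
  rewrite -exprMn ler_sqr ?nnegrE //; nra.
have x3 : (K * sp) ^+ 2 <= (eps * (1 - 2 * p0)) ^+ 2.
  rewrite !exprMn sp2; rewrite r2 in x2; nra.
have x4 : K * sp <= eps * (1 - 2 * p0).
  rewrite -ler_sqr ?nnegrE //; nra.
(* concavity *)
have c1 : 2 * sp ^+ 2 - 2 * sp * s >= (1 - 2 * p0) * (p0 - q).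
  have : 2 * sp * s <= sp ^+ 2 + s ^+ 2 by have := sqr_ge0 (sp - s); nra.
  rewrite sp2 s2; have := sqr_ge0 (p0 - q); nra.
have c2 : K * (p0 - q) <= 2 * eps * (sp - s).
  have : K * (p0 - q) * sp <= 2 * eps * (sp - s) * sp.
    have h1 : K * sp * (p0 - q) <= eps * (1 - 2 * p0) * (p0 - q).
      apply: ler_wpM2r => //; lra.
    have h2 : eps * ((1 - 2 * p0) * (p0 - q)) <= eps * (2 * sp ^+ 2 - 2 * sp * s).
      apply: ler_wpM2l => //; lra.
    nra.
  by rewrite ler_pM2r.
have cs : X * v + Y * u <= eps * s.
  have h : (X * v + Y * u) ^+ 2 <= (eps * s) ^+ 2.
    rewrite exprMn s2.
    have : (X * v + Y * u) ^+ 2 <= (X ^+ 2 + Y ^+ 2) * (u ^+ 2 + v ^+ 2).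
      have := sqr_ge0 (X * u - Y * v); nra.
    have : (X ^+ 2 + Y ^+ 2) * (u ^+ 2 + v ^+ 2) <= eps ^+ 2 * (q - q ^+ 2).
      apply: ler_pM => //; first nra; first nra.
      nra.
    lra.
  have es : 0 <= eps * s by nra.
  nra.
have ga : gam * a <= K * (1 - q) by nra.
nra.
Qed.
End K.

Section H.
Variable R : realType.
Local Notation C := R[i].
Local Notation RE := (@complex.Re R).
Local Notation IM := (@complex.Im R).

Lemma cplx_eta (z : C) : (RE z +i* IM z) = z.
Proof. by case: z. Qed.

Lemma rhsM (w ex ey dg : R -> R) g0 t (M : 'M[C]_2) :
  RE (lindblad_rhs w ex ey dg g0 t M 0 0) = (ex t * IM (M 1 0) - ey t * RE (M 1 0) - ex t * IM (M 0 1) - ey t * RE (M 0 1)) / 2 - (g0 + dg t) * RE (M 0 0) /\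
  IM (lindblad_rhs w ex ey dg g0 t M 0 0) = - (ex t * RE (M 1 0) + ey t * IM (M 1 0) - ex t * RE (M 0 1) + ey t * IM (M 0 1)) / 2 - (g0 + dg t) * IM (M 0 0) /\
  RE (lindblad_rhs w ex ey dg g0 t M 0 1) = (1 + w t) * IM (M 0 1) + (ex t * (IM (M 1 1) - IM (M 0 0)) - ey t * (RE (M 1 1) - RE (M 0 0))) / 2 - (g0 + dg t) * RE (M 0 1) / 2 /\
  IM (lindblad_rhs w ex ey dg g0 t M 0 1) = - (1 + w t) * RE (M 0 1) - (ex t * (RE (M 1 1) - RE (M 0 0)) + ey t * (IM (M 1 1) - IM (M 0 0))) / 2 - (g0 + dg t) * IM (M 0 1) / 2 /\
  RE (lindblad_rhs w ex ey dg g0 t M 1 0) = (ex t * (IM (M 0 0) - IM (M 1 1)) + ey t * (RE (M 0 0) - RE (M 1 1))) / 2 - (1 + w t) * IM (M 1 0) - (g0 + dg t) * RE (M 1 0) / 2 /\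
  IM (lindblad_rhs w ex ey dg g0 t M 1 0) = - (ex t * (RE (M 0 0) - RE (M 1 1)) - ey t * (IM (M 0 0) - IM (M 1 1))) / 2 + (1 + w t) * RE (M 1 0) - (g0 + dg t) * IM (M 1 0) / 2 /\
  RE (lindblad_rhs w ex ey dg g0 t M 1 1) = - (ex t * IM (M 1 0) - ey t * RE (M 1 0) - ex t * IM (M 0 1) - ey t * RE (M 0 1)) / 2 + (g0 + dg t) * RE (M 0 0) /\
  IM (lindblad_rhs w ex ey dg g0 t M 1 1) = (ex t * RE (M 1 0) + ey t * IM (M 1 0) - ex t * RE (M 0 1) + ey t * IM (M 0 1)) / 2 + (g0 + dg t) * IM (M 0 0).
Proof.
have := rhs_entries w ex ey dg g0 t (RE (M 0 0)) (IM (M 0 0)) (RE (M 0 1)) (IM (M 0 1))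
  (RE (M 1 0)) (IM (M 1 0)) (RE (M 1 1)) (IM (M 1 1)).
by rewrite !cplx_eta -mk2E.
Qed.

Lemma ket0bra0 : ket0 R *m bra0 R = mk2 1 0 0 0.
Proof.
apply/matrixP => i j; rewrite !mxE big_ord_recl big_ord0 !mxE /=.
case: i => [[|[|]]] //= ?; case: j => [[|[|]]] //= ?;
  rewrite ?addr0 ?mul1r ?mulr0 ?mul0r //= ?conjc1 ?conjc0 //.
all: by apply/eqP; rewrite eq_complex /= ?oppr0 ?eqxx.
Qed.

Lemma bra_rho_ket (M : 'M[C]_2) : (bra0 R *m M *m ket0 R) 0 0 = M 0 0.
Proof.
rewrite !mxE !big_ord_recl !big_ord0 !mxE /=.
rewrite !big_ord_recl !big_ord0 !mxE /=.
have e1 : (1 -i* 0 : C) = 1 by apply/eqP; rewrite eq_complex /= ?oppr0 ?eqxx.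
have e2 : ((- 0)*i : C) = 0 by apply/eqP; rewrite eq_complex /= ?oppr0 ?eqxx.
by rewrite e1 e2 !mul1r !mul0r !addr0 !mulr1 !mulr0 addr0.
Qed.

Lemma good_const (f f' : R -> R) : good f f' -> (forall s, 0 < s -> f' s = 0) ->
  forall t, 0 <= t -> f t = f 0.
Proof.
move=> Hg H0 t t0; apply/eqP; rewrite eq_le; apply/andP; split.
  apply: good_nincr Hg (lexx 0) t0 _ => c /andP[c0 _]; rewrite H0 //.
have Hn := good_opp Hg.
have := good_nincr Hn (lexx 0) t0 (fun c => _); rewrite /= lerN2; apply => c /andP[c0 _].
by rewrite H0 // oppr0.
Qed.

Lemma sqz (x : R) : x * x <= 0 -> x = 0.
Proof.
move=> h; apply/eqP; rewrite -[x == 0]orbb -mulf_eq0 eq_le h /=.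
by rewrite -expr2 sqr_ge0.
Qed.

Lemma sq4 (x y z w : R) : x * x + y * y + 2^-1 * (z * z + w * w) <= 0 ->
  [/\ x = 0, y = 0, z = 0 & w = 0].
Proof.
move=> H.
have hx := sqr_ge0 x; have hy := sqr_ge0 y; have hz := sqr_ge0 z; have hw := sqr_ge0 w.
rewrite !expr2 in hx hy hz hw.
split; apply: sqz; nra.
Qed.
End H.

Unset Implicit Arguments.

Local Notation RE := (@complex.Re _).
Local Notation IM := (@complex.Im _).
Theorem corollary1 (R : realType) (p0 eps om g0 g : R)
    (w ex ey dg : R -> R) (rho : R -> 'M[R[i]]_2) :
  0 < p0 -> p0 < 1 -> 0 < eps -> 0 <= om -> 0 <= g -> g <= g0 ->
  p0 <= 2^-1 - (g0 + g) / (2 * Num.sqrt (4 * eps ^+ 2 + (g0 + g) ^+ 2)) ->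
  (forall t, 0 <= t -> `|w t| <= om) ->
  (forall t, 0 <= t -> Num.sqrt (ex t ^+ 2 + ey t ^+ 2) <= eps) ->
  (forall t, 0 <= t -> `|dg t| <= g) ->
  (* initial condition rho_0 = |0><0| *)
  rho 0 = ket0 R *m bra0 R ->
  (* rho is right-continuous at 0 *)
  (forall k l : 'I_2,
      (fun s => @complex.Re R (rho s k l)) x @[x --> 0^'+] --> @complex.Re R (rho 0 k l)) ->
  (forall k l : 'I_2,
      (fun s => @complex.Im R (rho s k l)) x @[x --> 0^'+] --> @complex.Im R (rho 0 k l)) ->
  (* the master equation holds (entrywise, real and imaginary parts) for t > 0 *)
  (forall t : R, 0 < t -> forall k l : 'I_2,
      is_derive t 1 (fun s => @complex.Re R (rho s k l))
        (@complex.Re R (lindblad_rhs w ex ey dg g0 t (rho t) k l)) /\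
      is_derive t 1 (fun s => @complex.Im R (rho s k l))
        (@complex.Im R (lindblad_rhs w ex ey dg g0 t (rho t) k l))) ->
  forall t : R, 0 <= t ->
    t <= 2 * p0 / (4 * eps * Num.sqrt (p0 - p0 ^+ 2) + 2 * (g0 + g) * (1 - p0)) ->
    (1 - p0)%:C <= (bra0 R *m rho t *m ket0 R) 0 0.
Proof.
move=> p00 p01 eps0 om0 g_0 gg0 Hp0 Hw Hexy Hdg Hrho0 Hre Him Hder t t0 tT.
have gRe : forall k l, good (fun s => RE (rho s k l))
    (fun s => RE (lindblad_rhs w ex ey dg g0 s (rho s) k l)).
  by move=> k l; split; [move=> s s0; exact: (Hder s s0 k l).1 | exact: Hre].
have gIm : forall k l, good (fun s => IM (rho s k l))
    (fun s => IM (lindblad_rhs w ex ey dg g0 s (rho s) k l)).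
  by move=> k l; split; [move=> s s0; exact: (Hder s s0 k l).2 | exact: Him].
have gam : forall s, 0 <= s -> 0 <= g0 + dg s /\ g0 + dg s <= g0 + g.
  move=> s s0; have := Hdg s s0; rewrite ler_norml => /andP[h1 h2]; split; lra.
have R0 : rho 0 = mk2 1 0 0 0 by rewrite Hrho0 ket0bra0.
have T1 : forall s, 0 <= s -> RE (rho s 1 1) = 1 - RE (rho s 0 0).
  move=> s s0.
  have D1 : forall c, 0 < c -> RE (lindblad_rhs w ex ey dg g0 c (rho c) 0 0) +
                               RE (lindblad_rhs w ex ey dg g0 c (rho c) 1 1) = 0.
    move=> c c0; have [E1 [_ [_ [_ [_ [_ [E7 _]]]]]]] := rhsM w ex ey dg g0 c (rho c).
    by rewrite E1 E7; ring.
  have := good_const (good_add (gRe 0 0) (gRe 1 1)) D1 s0.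
  rewrite /= R0 !mxE /= => H; lra.
have T2 : forall s, 0 <= s -> IM (rho s 1 1) = - IM (rho s 0 0).
  move=> s s0.
  have D1 : forall c, 0 < c -> IM (lindblad_rhs w ex ey dg g0 c (rho c) 0 0) +
                               IM (lindblad_rhs w ex ey dg g0 c (rho c) 1 1) = 0.
    move=> c c0; have [_ [E2 [_ [_ [_ [_ [_ E8]]]]]]] := rhsM w ex ey dg g0 c (rho c).
    by rewrite E2 E8; ring.
  have := good_const (good_add (gIm 0 0) (gIm 1 1)) D1 s0.
  rewrite /= R0 !mxE /= => H; lra.
have Herm : forall s, 0 <= s -> [/\ IM (rho s 0 0) = 0, IM (rho s 1 1) = 0,
    RE (rho s 1 0) = RE (rho s 0 1) & IM (rho s 1 0) = - IM (rho s 0 1)].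
  move=> s s0.
  have gA := gIm 0 0; have gD := gIm 1 1.
  have gP := good_add (gRe 0 1) (good_opp (gRe 1 0)).
  have gQ := good_add (gIm 0 1) (gIm 1 0).
  have gN := good_add (good_add (good_mul gA gA) (good_mul gD gD))
    (good_mul (good_cst (2^-1)) (good_add (good_mul gP gP) (good_mul gQ gQ))).
  have := good_nincr gN (lexx 0) s0 _.
  rewrite /= R0 !mxE /= !(mulr0, subrr, addr0) => Hn.
  have HH : forall x y : R, x + - y = 0 -> y = x by move=> x y; lra.
  have HH2 : forall x y : R, x + y = 0 -> y = - x by move=> x y; lra.
  lapply Hn; first by move=> /sq4 [h1 h2 h3 h4]; split => //; [exact: HH | exact: HH2].
  move=> c /andP[c0 _] /=.
  have [E1 [E2 [E3 [E4 [E5 [E6 [E7 E8]]]]]]] := rhsM w ex ey dg g0 c (rho c).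
  rewrite E2 E3 E4 E5 E6 E8 (T2 c (ltW c0)).
  have [ga _] := gam c (ltW c0).
  have := mulr_ge0 ga (sqr_ge0 (IM (rho c 0 0))).
  have := mulr_ge0 ga (sqr_ge0 (RE (rho c 0 1) - RE (rho c 1 0))).
  have := mulr_ge0 ga (sqr_ge0 (IM (rho c 0 1) + IM (rho c 1 0))).
  rewrite !expr2; nra.
(* positivity *)
pose psi s := RE (rho s 0 1) * RE (rho s 0 1) + IM (rho s 0 1) * IM (rho s 0 1) +
  - (RE (rho s 0 0) * (1 + - RE (rho s 0 0))).
have gpsi : good psi (fun s => - (g0 + dg s) * (psi s + RE (rho s 0 0) * RE (rho s 0 0))).
  apply: (good_ext (good_add (good_add (good_mul (gRe 0 1) (gRe 0 1))
     (good_mul (gIm 0 1) (gIm 0 1)))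
     (good_opp (good_mul (gRe 0 0) (good_add (good_cst 1) (good_opp (gRe 0 0))))))).
  move=> c c0 /=; rewrite /psi.
  have [E1 [E2 [E3 [E4 [E5 [E6 [E7 E8]]]]]]] := rhsM w ex ey dg g0 c (rho c).
  rewrite E1 E3 E4.
  have [HA HD Hp Hq] := Herm c (ltW c0).
  rewrite HA HD Hp Hq (T1 c (ltW c0)).
  by field.
have psi0 : psi 0 = 0.
  by rewrite /psi R0 !mxE /=; field.
have psi_le : forall s, 0 <= s -> psi s <= 0.
  move=> s s0; rewrite leNgt; apply/negP => hs.
  have s1p : 0 < 1 + s by lra.
  pose eta := psi s / (2 * (1 + s)).
  have eta0 : 0 < eta by apply: divr_gt0; lra.
  have etaE : eta * (1 + s) = psi s / 2 by rewrite /eta; field; lra.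
  have gh := good_add gpsi (good_opp (good_mul (good_cst eta) (good_add (good_cst 1) (good_id R)))).
  pose h := fun r => psi r + - (eta * (1 + r)).
  have key : h s <= 0.
    apply: (@cont_ind R h s s0).
    - rewrite /h psi0; lra.
    - move=> r r0; exact: good_cont gh r0.
    move=> s1 s10 s1s hs1.
    have [pos|npos] := ltP 0 (psi s1).
    + have [d d0 Hd] := cont_near_right (good_right gpsi s10) pos.
      exists d => // r r1 r2.
      have Hn := good_nincr gh s10 (ltW r1).
      lapply Hn; first by move=> /= HH; move: hs1; rewrite /h; lra.
      move=> c /andP[c1 c2] /=.
      have := Hd c c1 (lt_trans c2 r2); rewrite ltr_norml => /andP[_ hh].
      have [ga _] := gam c (ltW (le_lt_trans s10 c1)).
      have hp : 0 <= psi c + RE (rho c 0 0) * RE (rho c 0 0).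
        by have := sqr_ge0 (RE (rho c 0 0)); rewrite expr2; lra.
      have := mulr_ge0 ga hp; lra.
    + have e0 : 0 < eta * (1 + s1) by apply: mulr_gt0; lra.
      have [d d0 Hd] := cont_near_right (good_right gh s10) e0.
      exists d => // r r1 r2.
      have := Hd r r1 r2; rewrite /= ltr_norml => /andP[hh _].
      move: hs1; rewrite /h; lra.
  move: key; rewrite /h etaE; lra.
have Hs : forall s, 0 <= s -> ex s ^+ 2 + ey s ^+ 2 <= eps ^+ 2.
  move=> s s0; have := Hexy s s0.
  have h0 : 0 <= ex s ^+ 2 + ey s ^+ 2 by apply: addr_ge0; apply: sqr_ge0.
  have := sqr_sqrtr h0; have := sqrtr_ge0 (ex s ^+ 2 + ey s ^+ 2).
  move: (Num.sqrt _) => z z0 zE zle; rewrite -zE; nra.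
pose F := 2 * eps * Num.sqrt (p0 - p0 ^+ 2) + (g0 + g) * (1 - p0).
have F0 : 0 < F.
  have : 0 < Num.sqrt (p0 - p0 ^+ 2).
    rewrite sqrtr_gt0; have : 0 < p0 * (1 - p0) by apply: mulr_gt0; lra.
    rewrite expr2; lra.
  have : 0 <= (g0 + g) * (1 - p0) by apply: mulr_ge0; lra.
  rewrite /F; nra.
have FT : F * t <= p0.
  move: tT; rewrite (_ : 4 * eps * Num.sqrt (p0 - p0 ^+ 2) + 2 * (g0 + g) * (1 - p0) = 2 * F);
    last by rewrite /F; ring.
  rewrite ler_pdivlMr; last lra.
  lra.
pose h := fun r => (1 + - RE (rho r 0 0)) + - (F * r).
have gh := good_add (good_add (good_cst 1) (good_opp (gRe 0 0)))
  (good_opp (good_mul (good_cst F) (good_id R))).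
have key : h t <= 0.
  apply: (@cont_ind R h t t0).
  - rewrite /h R0 !mxE /=; lra.
  - move=> r r0; exact: good_cont gh r0.
  move=> s1 s10 s1t hs1.
  have Fs : F * s1 < F * t by rewrite ltr_pM2l.
  have q1 : 1 - RE (rho s1 0 0) < p0 by move: hs1; rewrite /h; lra.
  have e0 : 0 < p0 - (1 - RE (rho s1 0 0)) by lra.
  have [d d0 Hd] := cont_near_right (good_right (gRe 0 0) s10) e0.
  exists d => // r r1 r2.
  have Hn := good_nincr gh s10 (ltW r1).
  lapply Hn; first by move=> /= HH; move: hs1; rewrite /h; lra.
  move=> c /andP[c1 c2] /=.
  have c0 : 0 < c by apply: le_lt_trans c1.
  have := Hd c c1 (lt_trans c2 r2); rewrite /= ltr_norml => /andP[hh1 hh2].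
  have [E1 _] := rhsM w ex ey dg g0 c (rho c).
  rewrite E1.
  have [HA HD Hp Hq] := Herm c (ltW c0).
  rewrite Hp Hq.
  have [ga gb] := gam c (ltW c0).
  have Hpsi : RE (rho c 0 1) ^+ 2 + IM (rho c 0 1) ^+ 2 <= RE (rho c 0 0) * (1 - RE (rho c 0 0)).
    have := psi_le c (ltW c0); rewrite /psi !expr2; lra.
  have a0 : 0 <= RE (rho c 0 0) by lra.
  have qp : 1 - RE (rho c 0 0) <= p0 by lra.
  have K0 : 0 <= g0 + g by lra.
  have := key_ineq p00 p01 eps0 K0 Hp0 (Hs c (ltW c0)) Hpsi a0 qp ga gb.
  rewrite /F; lra.
move: key; rewrite /h => hk.
have at0 : 1 - p0 <= RE (rho t 0 0) by lra.
rewrite bra_rho_ket lecE.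
have [HA _ _ _] := Herm t t0.
rewrite /= HA eqxx /=.
exact: at0.
Qed.
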